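(* Let $c>0$, $N\ge1$, and let $v=(v_1,\dots,v_N)$ and $Q_i^{jk}=Q_i^{kj}$ ($1\le i,j,k\le N$) be sufficiently regular functions on $\mathcal{K}_{[s_0,s_1]}$. Put $P_i^{jk}:=-\tfrac13 Q_i^{jk}$, $w_i:=v_i+P_i^{jk}(t/s)^2v_jv_k$, $$V_i^0:=\tfrac12\sum_\alpha|\partial_\alpha w_i|^2+\tfrac12c^2w_i^2+P_i^{jk}(t/s)^2v_i\Big(\partial_tv_j\partial_tv_k+\sum_a\partial_av_j\partial_av_k+c^2v_jv_k\Big),$$ $$-V_i^a:=\partial_tw_i\partial_aw_i+P_i^{jk}(t/s)^2v_i\big(\partial_tv_j\partial_av_k+\partial_tv_k\partial_av_j\big),$$ $e_{Q,c}[v]:=2\sum_{i=1}^N\big(V_i^0-(x^a/t)V_i^a\big)$ (summation over repeated $j,k\in\{1,\dots,N\}$ and $a\in\{1,2\}$). There exists $\varepsilon_s>0$ small such that if, pointwise in $\mathcal{K}_{[s_0,s_1]}$, for all $i,j,k$ and $\alpha$, $$|(t/s)^2Q_i^{jk}v_i|+|(t/s)^2Q_i^{jk}v_j|+|(t/s)^2Q_i^{jk}v_k|\le\varepsilon_s,\qquad |(t/s)^2v_j\partial_\alpha Q_i^{jk}|+|(t/s)^2v_k\partial_\alpha Q_i^{jk}|\le\varepsilon_s,$$ then $$\tfrac14 e_{Q,c}[v]\le\sum_{i=1}^Ne_c[v_i]\le 4e_{Q,c}[v].$$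
   Context: Coordinates $(t,x)\in\mathbb{R}^{2+1}$, $r=|x|$, $s=\sqrt{t^2-r^2}$, $\partial_0=\partial_t$. $\mathcal{K}_{[s_0,s_1]}=\{(t,x): t>r+1,\ s_0^2\le t^2-r^2\le s_1^2\}$. For a scalar $u$, $e_c[u]:=|(s/t)\partial_tu|^2+\sum_{a=1,2}|\underline{\partial}_au|^2+c^2u^2$ with $\underline{\partial}_a=(x^a/t)\partial_t+\partial_a$. *)

(* Defs.v *)
From Stdlib Require Import Reals Lra.
From Coquelicot Require Import Coquelicot.
Open Scope R_scope.

(* A scalar function on R^{2+1}, in coordinates (t, x1, x2). *)
Definition fn := R -> R -> R -> R.

Fixpoint sumN (n : nat) (f : nat -> R) : R :=
  match n with
  | O => 0
  | S m => sumN m f + f m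
  end.

Definition rad (x1 x2 : R) : R := sqrt (x1 ^ 2 + x2 ^ 2).
Definition sh (t x1 x2 : R) : R := sqrt (t ^ 2 - x1 ^ 2 - x2 ^ 2).

(* the spatial coordinate x^a, a = 1, 2 (encoded as a = 0 -> x1, else x2) *)
Definition xc (a : nat) (x1 x2 : R) : R := match a with O => x1 | _ => x2 end.

Definition pd (alpha : nat) (f : fn) : fn :=
  fun t x1 x2 =>
    match alpha with
    | O => Derive (fun t' => f t' x1 x2) t
    | 1%nat => Derive (fun y => f t y x2) x1
    | _ => Derive (fun y => f t x1 y) x2
    end.

(* spatial partial derivative d_a, a in {1,2}, encoded by a' = a-1 in {0,1} *)
Definition pds (a : nat) (f : fn) : fn := pd (S a) f.

Definition pderivable (f : fn) (t x1 x2 : R) : Prop :=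
  ex_derive (fun t' => f t' x1 x2) t /\
  ex_derive (fun y => f t y x2) x1 /\
  ex_derive (fun y => f t x1 y) x2.

Definition inK (s0 s1 t x1 x2 : R) : Prop :=
  t > rad x1 x2 + 1 /\ s0 ^ 2 <= t ^ 2 - x1 ^ 2 - x2 ^ 2 <= s1 ^ 2.

Definition ts2 : fn := fun t x1 x2 => (t / sh t x1 x2) ^ 2.

Definition e_c (c : R) (u : fn) : fn := fun t x1 x2 =>
  ((sh t x1 x2 / t) * pd 0 u t x1 x2) ^ 2
  + sumN 2 (fun a => (xc a x1 x2 / t * pd 0 u t x1 x2 + pds a u t x1 x2) ^ 2)
  + c ^ 2 * (u t x1 x2) ^ 2.

Section EQ.
Variables (c : R) (N : nat) (v : nat -> fn) (Q : nat -> nat -> nat -> fn).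

Definition P (i j k : nat) : fn := fun t x1 x2 => - (1/3) * Q i j k t x1 x2.

Definition w (i : nat) : fn := fun t x1 x2 =>
  v i t x1 x2 + sumN N (fun j => sumN N (fun k =>
     P i j k t x1 x2 * ts2 t x1 x2 * v j t x1 x2 * v k t x1 x2)).

Definition V0 (i : nat) : fn := fun t x1 x2 =>
  1/2 * sumN 3 (fun alpha => (pd alpha (w i) t x1 x2) ^ 2)
  + 1/2 * c ^ 2 * (w i t x1 x2) ^ 2
  + sumN N (fun j => sumN N (fun k =>
      P i j k t x1 x2 * ts2 t x1 x2 * v i t x1 x2 *
      (pd 0 (v j) t x1 x2 * pd 0 (v k) t x1 x2
       + sumN 2 (fun a => pds a (v j) t x1 x2 * pds a (v k) t x1 x2)
       + c ^ 2 * v j t x1 x2 * v k t x1 x2))).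

(* V_i^a, defined through  -V_i^a = ... ; a encoded as a-1 in {0,1} *)
Definition Va (i a : nat) : fn := fun t x1 x2 =>
  - (pd 0 (w i) t x1 x2 * pds a (w i) t x1 x2
     + sumN N (fun j => sumN N (fun k =>
         P i j k t x1 x2 * ts2 t x1 x2 * v i t x1 x2 *
         (pd 0 (v j) t x1 x2 * pds a (v k) t x1 x2
          + pd 0 (v k) t x1 x2 * pds a (v j) t x1 x2)))).

Definition e_Qc : fn := fun t x1 x2 =>
  2 * sumN N (fun i => V0 i t x1 x2
        - sumN 2 (fun a => xc a x1 x2 / t * Va i a t x1 x2)).

End EQ.

(* Main.v *)
Require Import Defs.
From Stdlib Require Import Reals Lra Lia.
From Coquelicot Require Import Coquelicot.
Open Scope R_scope.

Ltac sq_fix t x1 x2 :=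
  replace (t * (t * 1) + - (x1 * (x1 * 1)) + - (x2 * (x2 * 1))) with (t^2-x1^2-x2^2) by ring;
  let q := fresh "q" in
  set (q := sqrt (t^2-x1^2-x2^2));
  repeat match goal with |- context [sqrt ?a] => replace (sqrt a) with q by (unfold q; f_equal; ring) end;
  assert (Hqq : q*q = t^2-x1^2-x2^2) by (apply sqrt_sqrt; lra);
  assert (Hq : 0 < q) by (apply sqrt_lt_R0; lra).

Lemma ts2_d0 t x1 x2 : 0 < t^2 - x1^2 - x2^2 ->
  is_derive (fun z => ts2 z x1 x2) t (-2*t*(x1^2+x2^2)/(sh t x1 x2)^4).
Proof. intro H. unfold ts2, sh. auto_derive.
 - replace (t * (t * 1) + - (x1 * (x1 * 1)) + - (x2 * (x2 * 1))) with (t^2-x1^2-x2^2) by ring.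
   split; [lra|split; [apply Rgt_not_eq, sqrt_lt_R0; lra|tauto]].
 - sq_fix t x1 x2. replace (x1^2+x2^2) with (t^2-q*q) by lra. field. lra.
Qed.
Lemma ts2_d1 t x1 x2 : 0 < t^2 - x1^2 - x2^2 ->
  is_derive (fun z => ts2 t z x2) x1 (2*t^2*x1/(sh t x1 x2)^4).
Proof. intro H. unfold ts2, sh. auto_derive.
 - replace (t * (t * 1) + - (x1 * (x1 * 1)) + - (x2 * (x2 * 1))) with (t^2-x1^2-x2^2) by ring.
   split; [lra|split; [apply Rgt_not_eq, sqrt_lt_R0; lra|tauto]].
 - sq_fix t x1 x2. field. lra.
Qed.
Lemma ts2_d2 t x1 x2 : 0 < t^2 - x1^2 - x2^2 ->
  is_derive (fun z => ts2 t x1 z) x2 (2*t^2*x2/(sh t x1 x2)^4).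
Proof. intro H. unfold ts2, sh. auto_derive.
 - replace (t * (t * 1) + - (x1 * (x1 * 1)) + - (x2 * (x2 * 1))) with (t^2-x1^2-x2^2) by ring.
   split; [lra|split; [apply Rgt_not_eq, sqrt_lt_R0; lra|tauto]].
 - sq_fix t x1 x2. field. lra.
Qed.
Lemma sumN_ext n f g : (forall k, (k < n)%nat -> f k = g k) -> sumN n f = sumN n g.
Proof. induction n; simpl; intros H; [reflexivity|]. rewrite IHn, H; [reflexivity|lia|]. intros; apply H; lia. Qed.
Lemma sumN_plus n f g : sumN n (fun k => f k + g k) = sumN n f + sumN n g.
Proof. induction n; simpl; [ring|]. rewrite IHn; ring. Qed.
Lemma sumN_minus n f g : sumN n (fun k => f k - g k) = sumN n f - sumN n g.
Proof. induction n; simpl; [ring|]. rewrite IHn; ring. Qed.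
Lemma sumN_scal n a f : sumN n (fun k => a * f k) = a * sumN n f.
Proof. induction n; simpl; [ring|]. rewrite IHn; ring. Qed.
Lemma sumN_abs n f b : (forall k, (k < n)%nat -> Rabs (f k) <= b) -> Rabs (sumN n f) <= INR n * b.
Proof. induction n; cbn [sumN]; intros H.
 - rewrite Rabs_R0; simpl; lra.
 - eapply Rle_trans; [apply Rabs_triang|].
   assert (H1 := IHn (fun k Hk => H k ltac:(lia))). assert (H2 := H n ltac:(lia)).
   rewrite S_INR. lra.
Qed.
Lemma sumN_nonneg n f : (forall k, (k < n)%nat -> 0 <= f k) -> 0 <= sumN n f.
Proof. induction n; simpl; intros H; [lra|]. assert (H1 := IHn (fun k Hk => H k ltac:(lia))). assert (H2 := H n ltac:(lia)). lra. Qed.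
Lemma sumN_term n f i : (forall k, (k < n)%nat -> 0 <= f k) -> (i < n)%nat -> f i <= sumN n f.
Proof. induction n; simpl; intros H Hi; [lia|].
 assert (H0 := sumN_nonneg n f (fun k Hk => H k ltac:(lia))).
 destruct (Nat.eq_dec i n) as [->|Hne]. lra.
 assert (H1 := IHn (fun k Hk => H k ltac:(lia)) ltac:(lia)). assert (H2 := H n ltac:(lia)). lra.
Qed.

Lemma Derive_sumN n (f : nat -> R -> R) y : (forall k, (k < n)%nat -> ex_derive (f k) y) ->
  ex_derive (fun z => sumN n (fun k => f k z)) y /\
  Derive (fun z => sumN n (fun k => f k z)) y = sumN n (fun k => Derive (f k) y).
Proof. induction n; simpl; intros H.
 - split; [apply ex_derive_const| apply Derive_const].
 - destruct (IHn (fun k Hk => H k ltac:(lia))) as [H1 H2]. assert (H3 := H n ltac:(lia)).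
   split. apply (ex_derive_plus (fun z => sumN n (fun k => f k z)) (f n)); assumption.
   rewrite (Derive_plus (fun z => sumN n (fun k => f k z)) (f n)) by assumption. f_equal. exact H2.
Qed.

Lemma Derive_prod4 (q th a b : R -> R) y : ex_derive q y -> ex_derive th y -> ex_derive a y -> ex_derive b y ->
 ex_derive (fun z => -(1/3) * q z * th z * a z * b z) y /\
 Derive (fun z => -(1/3) * q z * th z * a z * b z) y = -(1/3)*(Derive q y * th y * a y * b y
   + q y * Derive th y * a y * b y + q y * th y * Derive a y * b y + q y * th y * a y * Derive b y).
Proof. intros Hq Ht Ha Hb. split.
 - auto_derive. tauto.
 - apply is_derive_unique. auto_derive. tauto. change (fun x:R => q x) with q; change (fun x:R => th x) with th; change (fun x:R => a x) with a; change (fun x:R => b x) with b. ring.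
Qed.

Lemma Derive_w_gen N (fv : nat -> R -> R) (fq : nat->nat->nat->R->R) (fth : R->R) i y :
 (forall j, (j<N)%nat -> ex_derive (fv j) y) -> ex_derive (fv i) y ->
 (forall j k, (j<N)%nat->(k<N)%nat -> ex_derive (fq i j k) y) -> ex_derive fth y ->
 Derive (fun z => fv i z + sumN N (fun j => sumN N (fun k => - (1/3) * fq i j k z * fth z * fv j z * fv k z))) y
 = Derive (fv i) y + sumN N (fun j => sumN N (fun k => -(1/3)*(Derive (fq i j k) y * fth y * fv j y * fv k y
   + fq i j k y * Derive fth y * fv j y * fv k y + fq i j k y * fth y * Derive (fv j) y * fv k y
   + fq i j k y * fth y * fv j y * Derive (fv k) y))).
Proof. intros Hv Hvi Hq Ht.
 assert (Hin : forall j, (j<N)%nat -> ex_derive (fun z => sumN N (fun k => - (1/3) * fq i j k z * fth z * fv j z * fv k z)) y /\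
   Derive (fun z => sumN N (fun k => - (1/3) * fq i j k z * fth z * fv j z * fv k z)) y =
   sumN N (fun k => -(1/3)*(Derive (fq i j k) y * fth y * fv j y * fv k y
   + fq i j k y * Derive fth y * fv j y * fv k y + fq i j k y * fth y * Derive (fv j) y * fv k y
   + fq i j k y * fth y * fv j y * Derive (fv k) y))).
 { intros j Hj. destruct (Derive_sumN N (fun k z => - (1/3) * fq i j k z * fth z * fv j z * fv k z) y) as [A B].
   - intros k Hk. apply Derive_prod4; auto.
   - split; [exact A|]. rewrite B. apply sumN_ext. intros k Hk. apply Derive_prod4; auto. }
 destruct (Derive_sumN N (fun j z => sumN N (fun k => - (1/3) * fq i j k z * fth z * fv j z * fv k z)) y) as [A B].
 { intros j Hj. apply Hin; auto. }
 rewrite (Derive_plus (fv i) (fun z => sumN N (fun j => sumN N (fun k => - (1/3) * fq i j k z * fth z * fv j z * fv k z)))) by assumption.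
 f_equal. etransitivity; [exact B|]. apply sumN_ext. intros j Hj. apply Hin; auto.
Qed.


Lemma pd_w N v Q i t x1 x2 alpha : 0 < t^2-x1^2-x2^2 -> (i<N)%nat ->
 (forall j, (j<N)%nat -> pderivable (v j) t x1 x2) ->
 (forall j k, (j<N)%nat -> (k<N)%nat -> pderivable (Q i j k) t x1 x2) ->
 pd alpha (w N v Q i) t x1 x2 = pd alpha (v i) t x1 x2 + sumN N (fun j => sumN N (fun k =>
  -(1/3)*(pd alpha (Q i j k) t x1 x2 * ts2 t x1 x2 * v j t x1 x2 * v k t x1 x2
   + Q i j k t x1 x2 * pd alpha ts2 t x1 x2 * v j t x1 x2 * v k t x1 x2
   + Q i j k t x1 x2 * ts2 t x1 x2 * pd alpha (v j) t x1 x2 * v k t x1 x2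
   + Q i j k t x1 x2 * ts2 t x1 x2 * v j t x1 x2 * pd alpha (v k) t x1 x2))).
Proof. intros HD Hi Hv HQ. destruct alpha as [|[|alpha]].
 - refine (Derive_w_gen N (fun j z => v j z x1 x2) (fun i j k z => Q i j k z x1 x2) (fun z => ts2 z x1 x2) i t _ _ _ _).
   + intros j Hj; apply Hv; auto.
   + apply Hv; auto.
   + intros j k Hj Hk; apply HQ; auto.
   + eexists; apply ts2_d0; auto.
 - refine (Derive_w_gen N (fun j z => v j t z x2) (fun i j k z => Q i j k t z x2) (fun z => ts2 t z x2) i x1 _ _ _ _).
   + intros j Hj; apply Hv; auto.
   + apply Hv; auto.
   + intros j k Hj Hk; apply HQ; auto.
   + eexists; apply ts2_d1; auto.
 - refine (Derive_w_gen N (fun j z => v j t x1 z) (fun i j k z => Q i j k t x1 z) (fun z => ts2 t x1 z) i x2 _ _ _ _).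
   + intros j Hj; apply Hv; auto.
   + apply Hv; auto.
   + intros j k Hj Hk; apply HQ; auto.
   + eexists; apply ts2_d2; auto.
Qed.

Definition G (c : R) (u : fn) (m : nat) (t x1 x2 : R) : R :=
 match m with
 | O => sh t x1 x2 / t * pd 0 u t x1 x2
 | 1%nat => x1 / t * pd 0 u t x1 x2 + pd 1 u t x1 x2
 | 2%nat => x2 / t * pd 0 u t x1 x2 + pd 2 u t x1 x2
 | _ => c * u t x1 x2 end.

Lemma e_c_G c u t x1 x2 : e_c c u t x1 x2 = sumN 4 (fun m => (G c u m t x1 x2)^2).
Proof. unfold e_c, G, pds. simpl. ring. Qed.

Lemma sig2 t x1 x2 : t <> 0 -> 0 <= t^2 - x1^2 - x2^2 ->
  (sh t x1 x2 / t)^2 = 1 - (x1/t)^2 - (x2/t)^2.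
Proof. intros Ht HD. unfold Rdiv. rewrite Rpow_mult_distr. unfold sh. rewrite pow2_sqrt by lra.
 field. auto. Qed.

Lemma eq_via (L R0 M a b : R) : a = b -> L - R0 = M * (a - b) -> L = R0.
Proof. intros H1 H2. rewrite H1 in H2. replace (b - b) with 0 in H2 by ring. lra. Qed.

Lemma sum2_comb N (F X Y0 Y1 : nat -> nat -> R) r1 r2 :
 (forall j k, (j<N)%nat -> (k<N)%nat -> F j k = X j k + r1 * Y0 j k + r2 * Y1 j k) ->
 sumN N (fun j => sumN N (F j)) = sumN N (fun j => sumN N (X j)) + r1 * sumN N (fun j => sumN N (Y0 j)) + r2 * sumN N (fun j => sumN N (Y1 j)).
Proof. intros H.
 rewrite <- !sumN_scal, <- !sumN_plus. apply sumN_ext. intros j Hj.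
 rewrite <- !sumN_scal, <- !sumN_plus. apply sumN_ext. intros k Hk. auto.
Qed.

Lemma eQc_eq c N v Q t x1 x2 : t <> 0 -> 0 <= t^2 - x1^2 - x2^2 ->
 e_Qc c N v Q t x1 x2 = sumN N (fun i => sumN 4 (fun m => (G c (w N v Q i) m t x1 x2)^2)
   + 2 * sumN N (fun j => sumN N (fun k => P Q i j k t x1 x2 * ts2 t x1 x2 * v i t x1 x2 *
        sumN 4 (fun m => G c (v j) m t x1 x2 * G c (v k) m t x1 x2)))).
Proof. intros Ht HD. assert (Hs := sig2 t x1 x2 Ht HD).
 unfold e_Qc. rewrite <- sumN_scal. apply sumN_ext; intros i Hi.
 unfold V0.
 replace (sumN 2 (fun a => xc a x1 x2 / t * Va N v Q i a t x1 x2)) with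
   (x1/t * Va N v Q i 0 t x1 x2 + x2/t * Va N v Q i 1 t x1 x2) by (simpl; ring).
 unfold Va.
 rewrite (sum2_comb N (fun j k => P Q i j k t x1 x2 * ts2 t x1 x2 * v i t x1 x2 *
        sumN 4 (fun m => G c (v j) m t x1 x2 * G c (v k) m t x1 x2)) (fun j k => P Q i j k t x1 x2 * ts2 t x1 x2 * v i t x1 x2 *
      (pd 0 (v j) t x1 x2 * pd 0 (v k) t x1 x2
       + sumN 2 (fun a => pds a (v j) t x1 x2 * pds a (v k) t x1 x2)
       + c ^ 2 * v j t x1 x2 * v k t x1 x2))
   (fun j k => P Q i j k t x1 x2 * ts2 t x1 x2 * v i t x1 x2 *
         (pd 0 (v j) t x1 x2 * pds 0 (v k) t x1 x2
          + pd 0 (v k) t x1 x2 * pds 0 (v j) t x1 x2))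
   (fun j k => P Q i j k t x1 x2 * ts2 t x1 x2 * v i t x1 x2 *
         (pd 0 (v j) t x1 x2 * pds 1 (v k) t x1 x2
          + pd 0 (v k) t x1 x2 * pds 1 (v j) t x1 x2)) (x1/t) (x2/t)).
 - apply (eq_via _ _ (- pd 0 (w N v Q i) t x1 x2 ^ 2) _ _ Hs). cbn [sumN G]; unfold pds. field. auto.
 - intros j k _ _. apply (eq_via _ _ (P Q i j k t x1 x2 * ts2 t x1 x2 * v i t x1 x2 * pd 0 (v j) t x1 x2 * pd 0 (v k) t x1 x2) _ _ Hs).
   cbn [sumN G]; unfold pds; ring.
Qed.
Lemma abs2 a b A B : Rabs a <= A -> Rabs b <= B -> Rabs (a*b) <= A*B.
Proof. intros. rewrite Rabs_mult. apply Rmult_le_compat; auto using Rabs_pos. Qed.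
Lemma abs3 a b k A B K : Rabs a <= A -> Rabs b <= B -> Rabs k <= K -> Rabs (a*b*k) <= A*B*K.
Proof. intros. apply abs2; auto. apply abs2; auto. Qed.
Lemma abs_le a b : Rabs a <= b -> -b <= a <= b.
Proof. intros H. assert (H1 := Rle_abs a). assert (H2 := Rle_abs (-a)). rewrite Rabs_Ropp in H2. lra. Qed.

Lemma hb0 (σ θ θ0 κ q dq vj vk dvj dvk eps c SE : R) :
 0 < c -> σ*θ0 = θ*κ -> Rabs σ <= 1 -> Rabs κ <= 2 ->
 Rabs (θ*q*vj) <= eps -> Rabs (θ*q*vk) <= eps -> Rabs (θ*vj*dq) <= eps ->
 Rabs (c*vk) <= SE -> Rabs (σ*dvj) <= SE -> Rabs (σ*dvk) <= SE ->
 Rabs (σ * (-(1/3)*(dq*θ*vj*vk + q*θ0*vj*vk + q*θ*dvj*vk + q*θ*vj*dvk))) <= (1+2/c)*eps*SE.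
Proof. intros Hc Hk Hs Hkb H1 H2 H3 H4 H5 H6.
 assert (E : σ * (-(1/3)*(dq*θ*vj*vk + q*θ0*vj*vk + q*θ*dvj*vk + q*θ*vj*dvk)) =
   -(1/3)*((θ*vj*dq)*(c*vk)*(σ/c) + (θ*q*vj)*(c*vk)*(κ/c) + (θ*q*vk)*(σ*dvj) + (θ*q*vj)*(σ*dvk))).
 { replace (q*θ0*vj*vk) with (q*vj*vk*θ0) by ring.
   replace (σ * (-(1/3)*(dq*θ*vj*vk + q*vj*vk*θ0 + q*θ*dvj*vk + q*θ*vj*dvk))) with
     (-(1/3)*(σ*dq*θ*vj*vk + q*vj*vk*(σ*θ0) + q*θ*(σ*dvj)*vk + q*θ*vj*(σ*dvk))) by ring.
   rewrite Hk. field. lra. }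
 rewrite E.
 assert (Hsc : Rabs (σ/c) <= 1/c). { unfold Rdiv. rewrite Rabs_mult, Rabs_inv, (Rabs_pos_eq c) by lra.
   apply Rmult_le_compat_r; [left; apply Rinv_0_lt_compat; lra|lra]. }
 assert (Hkc : Rabs (κ/c) <= 2/c). { unfold Rdiv. rewrite Rabs_mult, Rabs_inv, (Rabs_pos_eq c) by lra.
   apply Rmult_le_compat_r; [left; apply Rinv_0_lt_compat; lra|lra]. }
 assert (T1 := abs_le _ _ (abs3 _ _ _ _ _ _ H3 H4 Hsc)).
 assert (T2 := abs_le _ _ (abs3 _ _ _ _ _ _ H1 H4 Hkc)).
 assert (T3 := abs_le _ _ (abs2 _ _ _ _ H2 H5)).
 assert (T4 := abs_le _ _ (abs2 _ _ _ _ H1 H6)).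
 assert (He : 0 <= eps) by (eapply Rle_trans; [apply Rabs_pos|exact H1]).
 assert (HS : 0 <= SE) by (eapply Rle_trans; [apply Rabs_pos|exact H4]).
 assert (Hic : 0 <= 1/c) by (unfold Rdiv; rewrite Rmult_1_l; left; apply Rinv_0_lt_compat; lra).
 assert (HP : 0 <= eps*SE*(1/c)) by (apply Rmult_le_pos; [apply Rmult_le_pos|]; auto).
 apply Rabs_le. replace (2/c) with (2*(1/c)) in * by (field; lra).
 replace ((1 + 2*(1/c))*eps*SE) with (eps*SE + 2*(eps*SE*(1/c))) by ring.
 assert (HP2 : 0 <= eps*SE) by (apply Rmult_le_pos; auto).
 replace (eps*SE*(2*(1/c))) with (2*(eps*SE*(1/c))) in * by ring.
 lra.
Qed.

Lemma hba (ρ θ θ0 θa κ q dq0 dqa vj vk dvj0 dvja dvk0 dvka eps c SE : R) :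
 0 < c -> ρ*θ0 + θa = θ*κ -> Rabs ρ <= 1 -> Rabs κ <= 2 ->
 Rabs (θ*q*vj) <= eps -> Rabs (θ*q*vk) <= eps -> Rabs (θ*vj*dq0) <= eps -> Rabs (θ*vj*dqa) <= eps ->
 Rabs (c*vk) <= SE -> Rabs (ρ*dvj0 + dvja) <= SE -> Rabs (ρ*dvk0 + dvka) <= SE ->
 Rabs (ρ * (-(1/3)*(dq0*θ*vj*vk + q*θ0*vj*vk + q*θ*dvj0*vk + q*θ*vj*dvk0))
        + (-(1/3)*(dqa*θ*vj*vk + q*θa*vj*vk + q*θ*dvja*vk + q*θ*vj*dvka))) <= (1+2/c)*eps*SE.
Proof. intros Hc Hk Hs Hkb H1 H2 H3 H3' H4 H5 H6.
 assert (E : ρ * (-(1/3)*(dq0*θ*vj*vk + q*θ0*vj*vk + q*θ*dvj0*vk + q*θ*vj*dvk0))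
        + (-(1/3)*(dqa*θ*vj*vk + q*θa*vj*vk + q*θ*dvja*vk + q*θ*vj*dvka)) =
   -(1/3)*((ρ*(θ*vj*dq0) + θ*vj*dqa)*(c*vk)*(1/c) + (θ*q*vj)*(c*vk)*(κ/c) + (θ*q*vk)*(ρ*dvj0 + dvja) + (θ*q*vj)*(ρ*dvk0+dvka))).
 { replace (ρ * (-(1/3)*(dq0*θ*vj*vk + q*θ0*vj*vk + q*θ*dvj0*vk + q*θ*vj*dvk0))
        + (-(1/3)*(dqa*θ*vj*vk + q*θa*vj*vk + q*θ*dvja*vk + q*θ*vj*dvka))) with
     (-(1/3)*((ρ*dq0 + dqa)*θ*vj*vk + q*vj*vk*(ρ*θ0+θa) + q*θ*(ρ*dvj0+dvja)*vk + q*θ*vj*(ρ*dvk0+dvka))) by ring.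
   rewrite Hk. field. lra. }
 rewrite E.
 assert (Hsc : Rabs (1/c) <= 1/c). { rewrite Rabs_pos_eq. lra. unfold Rdiv; rewrite Rmult_1_l; left; apply Rinv_0_lt_compat; lra. }
 assert (Hkc : Rabs (κ/c) <= 2/c). { unfold Rdiv. rewrite Rabs_mult, Rabs_inv, (Rabs_pos_eq c) by lra.
   apply Rmult_le_compat_r; [left; apply Rinv_0_lt_compat; lra|lra]. }
 assert (He : 0 <= eps) by (eapply Rle_trans; [apply Rabs_pos|exact H1]).
 assert (H7 : Rabs (ρ*(θ*vj*dq0) + θ*vj*dqa) <= 2*eps).
 { eapply Rle_trans; [apply Rabs_triang|]. assert (A := abs2 _ _ _ _ Hs H3). lra. }
 assert (T1 := abs_le _ _ (abs3 _ _ _ _ _ _ H7 H4 Hsc)).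
 assert (T2 := abs_le _ _ (abs3 _ _ _ _ _ _ H1 H4 Hkc)).
 assert (T3 := abs_le _ _ (abs2 _ _ _ _ H2 H5)).
 assert (T4 := abs_le _ _ (abs2 _ _ _ _ H1 H6)).
 assert (HS : 0 <= SE) by (eapply Rle_trans; [apply Rabs_pos|exact H4]).
 assert (Hic : 0 <= 1/c) by (unfold Rdiv; rewrite Rmult_1_l; left; apply Rinv_0_lt_compat; lra).
 assert (HP : 0 <= eps*SE*(1/c)) by (apply Rmult_le_pos; [apply Rmult_le_pos|]; auto).
 apply Rabs_le. replace (2/c) with (2*(1/c)) in * by (field; lra).
 replace ((1 + 2*(1/c))*eps*SE) with (eps*SE + 2*(eps*SE*(1/c))) by ring.
 assert (HP2 : 0 <= eps*SE) by (apply Rmult_le_pos; auto).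
 replace (eps*SE*(2*(1/c))) with (2*(eps*SE*(1/c))) in * by ring.
 replace (2*eps*SE*(1/c)) with (2*(eps*SE*(1/c))) in * by ring.
 lra.
Qed.

Lemma hb3 (θ q vj vk eps c SE : R) : 0 < c ->
 Rabs (θ*q*vj) <= eps -> Rabs (c*vk) <= SE ->
 Rabs (c * (-(1/3)*q*θ*vj*vk)) <= (1+2/c)*eps*SE.
Proof. intros Hc H1 H2.
 replace (c * (-(1/3)*q*θ*vj*vk)) with (-(1/3)*((θ*q*vj)*(c*vk))) by ring.
 assert (T := abs_le _ _ (abs2 _ _ _ _ H1 H2)).
 assert (He : 0 <= eps) by (eapply Rle_trans; [apply Rabs_pos|exact H1]).
 assert (HS : 0 <= SE) by (eapply Rle_trans; [apply Rabs_pos|exact H2]).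
 assert (Hic : 0 <= 2/c) by (unfold Rdiv; apply Rmult_le_pos; [lra|left; apply Rinv_0_lt_compat; lra]).
 assert (HP : 0 <= eps*SE*(2/c)) by (apply Rmult_le_pos; [apply Rmult_le_pos|]; auto).
 assert (HP2 : 0 <= eps*SE) by (apply Rmult_le_pos; auto).
 apply Rabs_le. replace ((1+2/c)*eps*SE) with (eps*SE + eps*SE*(2/c)) by ring. lra.
Qed.

Lemma Gw_bound c N v Q i t x1 x2 m eps SE κ0 :
 0 < c -> 0 < t -> 0 < t^2-x1^2-x2^2 -> (i<N)%nat -> (m < 4)%nat ->
 (forall j, (j<N)%nat -> pderivable (v j) t x1 x2) ->
 (forall j k, (j<N)%nat -> (k<N)%nat -> pderivable (Q i j k) t x1 x2) ->
 (forall j m, (j<N)%nat -> (m<4)%nat -> Rabs (G c (v j) m t x1 x2) <= SE) ->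
 (forall j k, (j<N)%nat -> (k<N)%nat ->
    Rabs (ts2 t x1 x2 * Q i j k t x1 x2 * v j t x1 x2) <= eps /\
    Rabs (ts2 t x1 x2 * Q i j k t x1 x2 * v k t x1 x2) <= eps /\
    forall alpha, (alpha < 3)%nat -> Rabs (ts2 t x1 x2 * v j t x1 x2 * pd alpha (Q i j k) t x1 x2) <= eps) ->
 sh t x1 x2 / t * pd 0 ts2 t x1 x2 = ts2 t x1 x2 * κ0 -> Rabs (sh t x1 x2 / t) <= 1 -> Rabs κ0 <= 2 ->
 x1/t * pd 0 ts2 t x1 x2 + pd 1 ts2 t x1 x2 = ts2 t x1 x2 * (2*x1/t^2) -> Rabs (x1/t) <= 1 -> Rabs (2*x1/t^2) <= 2 ->
 x2/t * pd 0 ts2 t x1 x2 + pd 2 ts2 t x1 x2 = ts2 t x1 x2 * (2*x2/t^2) -> Rabs (x2/t) <= 1 -> Rabs (2*x2/t^2) <= 2 ->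
 Rabs (G c (w N v Q i) m t x1 x2 - G c (v i) m t x1 x2) <= INR N * (INR N * ((1+2/c)*eps*SE)).
Proof.
 intros Hc Ht HD Hi Hm Hv HQ HG Hs Hk0 Hsig Hk0b Hk1 Hr1 Hk1b Hk2 Hr2 Hk2b.
 assert (HGv : forall j, (j<N)%nat -> Rabs (c * v j t x1 x2) <= SE) by (intros j Hj; exact (HG j 3%nat Hj ltac:(lia))).
 destruct m as [|[|[|[|m]]]]; [| | | |lia]; unfold G; cbv beta iota.
 - rewrite (pd_w N v Q i t x1 x2 0) by auto.
   match goal with |- Rabs (?s * (?A + ?S) - ?s * ?A) <= _ => replace (s * (A + S) - s * A) with (s * S) by ring end.
   rewrite <- sumN_scal. apply sumN_abs. intros j Hj. cbv beta.
   rewrite <- sumN_scal. apply sumN_abs. intros k Hk. cbv beta.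
   destruct (Hs j k Hj Hk) as [H1 [H2 H3]].
   apply (hb0 _ _ _ κ0); auto; try (apply H3; lia);
   try exact (HG j 0%nat Hj ltac:(lia)); try exact (HG k 0%nat Hk ltac:(lia)).
 - rewrite (pd_w N v Q i t x1 x2 0) by auto. rewrite (pd_w N v Q i t x1 x2 1) by auto.
   match goal with |- Rabs (?r * (?A + ?S) + (?B + ?T) - (?r * ?A + ?B)) <= _ =>
     replace (r * (A + S) + (B + T) - (r * A + B)) with (r * S + T) by ring end.
   rewrite <- sumN_scal, <- sumN_plus. apply sumN_abs. intros j Hj. cbv beta.
   rewrite <- sumN_scal, <- sumN_plus. apply sumN_abs. intros k Hk. cbv beta.
   destruct (Hs j k Hj Hk) as [H1 [H2 H3]].
   apply (hba _ _ _ _ (2*x1/t^2)); auto; try (apply H3; lia);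
   try exact (HG j 1%nat Hj ltac:(lia)); try exact (HG k 1%nat Hk ltac:(lia)).
 - rewrite (pd_w N v Q i t x1 x2 0) by auto. rewrite (pd_w N v Q i t x1 x2 2) by auto.
   match goal with |- Rabs (?r * (?A + ?S) + (?B + ?T) - (?r * ?A + ?B)) <= _ =>
     replace (r * (A + S) + (B + T) - (r * A + B)) with (r * S + T) by ring end.
   rewrite <- sumN_scal, <- sumN_plus. apply sumN_abs. intros j Hj. cbv beta.
   rewrite <- sumN_scal, <- sumN_plus. apply sumN_abs. intros k Hk. cbv beta.
   destruct (Hs j k Hj Hk) as [H1 [H2 H3]].
   apply (hba _ _ _ _ (2*x2/t^2)); auto; try (apply H3; lia);
   try exact (HG j 2%nat Hj ltac:(lia)); try exact (HG k 2%nat Hk ltac:(lia)).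
 - unfold w, P.
   match goal with |- Rabs (c * (?A + ?S) - c * ?A) <= _ => replace (c * (A + S) - c * A) with (c * S) by ring end.
   rewrite <- sumN_scal. apply sumN_abs. intros j Hj. cbv beta.
   rewrite <- sumN_scal. apply sumN_abs. intros k Hk. cbv beta.
   destruct (Hs j k Hj Hk) as [H1 [H2 H3]].
   apply hb3; auto.
Qed.

Lemma Gsq_bound c u t x1 x2 m : (m < 4)%nat -> (G c u m t x1 x2)^2 <= e_c c u t x1 x2.
Proof. intros Hm. rewrite e_c_G. apply (sumN_term 4 (fun m => (G c u m t x1 x2)^2)); auto.
 intros k _. apply pow2_ge_0. Qed.

Lemma e_c_nonneg c u t x1 x2 : 0 <= e_c c u t x1 x2.
Proof. rewrite e_c_G. apply sumN_nonneg. intros; apply pow2_ge_0. Qed.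

Lemma sq_diff (X Y d SE : R) : Rabs (Y - X) <= d -> Rabs X <= SE -> Rabs (Y^2 - X^2) <= d * (d + 2*SE).
Proof. intros H1 H2. replace (Y^2 - X^2) with ((Y - X) * ((Y - X) + 2 * X)) by ring.
 apply abs2; auto. eapply Rle_trans; [apply Rabs_triang|]. rewrite Rabs_mult, (Rabs_pos_eq 2) by lra. lra. Qed.

Theorem lemma3p1 :
  forall (c : R) (N : nat), 0 < c -> (1 <= N)%nat ->
  exists eps_s : R, 0 < eps_s /\
  forall (s0 s1 : R) (v : nat -> fn) (Q : nat -> nat -> nat -> fn),
    (forall i j k t x1 x2, (i < N)%nat -> (j < N)%nat -> (k < N)%nat ->
       Q i j k t x1 x2 = Q i k j t x1 x2) ->
    (forall t x1 x2, inK s0 s1 t x1 x2 ->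
       (forall i, (i < N)%nat -> pderivable (v i) t x1 x2) /\
       (forall i j k, (i < N)%nat -> (j < N)%nat -> (k < N)%nat ->
          pderivable (Q i j k) t x1 x2)) ->
    (forall t x1 x2, inK s0 s1 t x1 x2 ->
       forall i j k, (i < N)%nat -> (j < N)%nat -> (k < N)%nat ->
         Rabs (ts2 t x1 x2 * Q i j k t x1 x2 * v i t x1 x2)
         + Rabs (ts2 t x1 x2 * Q i j k t x1 x2 * v j t x1 x2)
         + Rabs (ts2 t x1 x2 * Q i j k t x1 x2 * v k t x1 x2) <= eps_s
         /\
         forall alpha, (alpha < 3)%nat ->
           Rabs (ts2 t x1 x2 * v j t x1 x2 * pd alpha (Q i j k) t x1 x2)
           + Rabs (ts2 t x1 x2 * v k t x1 x2 * pd alpha (Q i j k) t x1 x2)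
             <= eps_s) ->
    forall t x1 x2, inK s0 s1 t x1 x2 ->
      1/4 * e_Qc c N v Q t x1 x2 <= sumN N (fun i => e_c c (v i) t x1 x2)
      /\ sumN N (fun i => e_c c (v i) t x1 x2) <= 4 * e_Qc c N v Q t x1 x2.
Proof.
 intros c N Hc HN.
 assert (Hn : 1 <= INR N) by (apply (le_INR 1); lia).
 set (n := INR N) in *.
 set (K := 1 + 2/c).
 assert (HK1 : 1 <= K). { unfold K. assert (0 < 2/c) by (unfold Rdiv; apply Rmult_lt_0_compat; [lra|apply Rinv_0_lt_compat; lra]). lra. }
 exists (1/(100 * n^3 * K)).
 assert (Heps : 0 < 1/(100 * n^3 * K)).
 { unfold Rdiv. apply Rmult_lt_0_compat; [lra|]. apply Rinv_0_lt_compat.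
   apply Rmult_lt_0_compat; [apply Rmult_lt_0_compat|]; try lra. apply pow_lt; lra. }
 split; [exact Heps|].
 set (eps := 1/(100 * n^3 * K)) in *.
 intros s0 s1 v Q Hsym Hreg Hsmall t x1 x2 HK.
 destruct (Hreg t x1 x2 HK) as [Hv HQ].
 assert (Hsm := Hsmall t x1 x2 HK).
 destruct HK as [Htr [HD1 HD2]].
 assert (Hr0 : 0 <= rad x1 x2) by apply sqrt_pos.
 assert (Hrr : rad x1 x2 * rad x1 x2 = x1^2 + x2^2) by (apply sqrt_sqrt; nra).
 assert (Ht1 : 1 < t) by lra.
 assert (HD : 1 < t^2 - x1^2 - x2^2) by nra.
 set (s := sh t x1 x2).
 assert (Hss : s * s = t^2 - x1^2 - x2^2) by (apply sqrt_sqrt; lra).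
 assert (Hs0 : 0 <= s) by apply sqrt_pos.
 assert (Hs1 : 1 < s) by nra.
 assert (Hst : s <= t) by nra.
 assert (Hx1 : Rabs x1 < t). { apply Rabs_def1; nra. }
 assert (Hx2 : Rabs x2 < t). { apply Rabs_def1; nra. }
 assert (Hth : ts2 t x1 x2 = t^2 / (s*s)) by (unfold ts2; fold s; field; lra).
 assert (Hd0 : pd 0 ts2 t x1 x2 = -2*t*(x1^2+x2^2)/s^4) by (apply is_derive_unique; apply ts2_d0; lra).
 assert (Hd1 : pd 1 ts2 t x1 x2 = 2*t^2*x1/s^4) by (apply is_derive_unique; apply ts2_d1; lra).
 assert (Hd2 : pd 2 ts2 t x1 x2 = 2*t^2*x2/s^4) by (apply is_derive_unique; apply ts2_d2; lra).
 set (κ0 := -2*(x1^2+x2^2)/(t^2*s)).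
 assert (Hk0 : s / t * pd 0 ts2 t x1 x2 = ts2 t x1 x2 * κ0) by (rewrite Hd0, Hth; unfold κ0; field; lra).
 assert (Hk1 : x1/t * pd 0 ts2 t x1 x2 + pd 1 ts2 t x1 x2 = ts2 t x1 x2 * (2*x1/t^2)).
 { rewrite Hd0, Hd1, Hth. replace (x1^2+x2^2) with (t^2 - s*s) by lra. field. lra. }
 assert (Hk2 : x2/t * pd 0 ts2 t x1 x2 + pd 2 ts2 t x1 x2 = ts2 t x1 x2 * (2*x2/t^2)).
 { rewrite Hd0, Hd2, Hth. replace (x1^2+x2^2) with (t^2 - s*s) by lra. field. lra. }
 assert (Hsig : Rabs (s/t) <= 1).
 { rewrite Rabs_pos_eq. apply Rmult_le_reg_r with t; [lra|]. unfold Rdiv; rewrite Rmult_assoc, Rinv_l; lra.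
   unfold Rdiv; apply Rmult_le_pos; [lra|left; apply Rinv_0_lt_compat; lra]. }
 assert (Hr1 : Rabs (x1/t) <= 1).
 { unfold Rdiv. rewrite Rabs_mult, Rabs_inv, (Rabs_pos_eq t) by lra.
   apply Rmult_le_reg_r with t; [lra|]. rewrite Rmult_assoc, Rinv_l; lra. }
 assert (Hr2 : Rabs (x2/t) <= 1).
 { unfold Rdiv. rewrite Rabs_mult, Rabs_inv, (Rabs_pos_eq t) by lra.
   apply Rmult_le_reg_r with t; [lra|]. rewrite Rmult_assoc, Rinv_l; lra. }
 assert (Hk1b : Rabs (2*x1/t^2) <= 2).
 { unfold Rdiv. rewrite !Rabs_mult, Rabs_inv, (Rabs_pos_eq (t^2)) by nra. rewrite (Rabs_pos_eq 2) by lra.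
   apply Rmult_le_reg_r with (t^2); [nra|]. rewrite Rmult_assoc, Rinv_l; nra. }
 assert (Hk2b : Rabs (2*x2/t^2) <= 2).
 { unfold Rdiv. rewrite !Rabs_mult, Rabs_inv, (Rabs_pos_eq (t^2)) by nra. rewrite (Rabs_pos_eq 2) by lra.
   apply Rmult_le_reg_r with (t^2); [nra|]. rewrite Rmult_assoc, Rinv_l; nra. }
 assert (Hk0b : Rabs κ0 <= 2).
 { assert (Hq : 0 <= (x1^2+x2^2)/(t^2*s) <= 1).
   { split. unfold Rdiv; apply Rmult_le_pos; [nra| left; apply Rinv_0_lt_compat; nra].
     apply Rmult_le_reg_r with (t^2*s); [nra|]. unfold Rdiv; rewrite Rmult_assoc, Rinv_l by nra. nra. }
   replace κ0 with (-2 * ((x1^2+x2^2)/(t^2*s))) by (unfold κ0; field; nra).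
   apply Rabs_le. lra. }
 set (E := sumN N (fun i => e_c c (v i) t x1 x2)).
 assert (HE0 : 0 <= E) by (apply sumN_nonneg; intros; apply e_c_nonneg).
 set (SE := sqrt E).
 assert (HSE : SE * SE = E) by (apply sqrt_sqrt; auto).
 assert (HSE0 : 0 <= SE) by apply sqrt_pos.
 assert (HG : forall j m, (j<N)%nat -> (m<4)%nat -> Rabs (G c (v j) m t x1 x2) <= SE).
 { intros j m Hj Hm. rewrite <- (Rabs_pos_eq SE) by auto. apply Rsqr_le_abs_0.
   unfold Rsqr. replace (SE*SE) with E. replace (G c (v j) m t x1 x2 * G c (v j) m t x1 x2) with ((G c (v j) m t x1 x2)^2) by ring.
   eapply Rle_trans. apply Gsq_bound; auto.
   apply (sumN_term N (fun i => e_c c (v i) t x1 x2)); auto. intros; apply e_c_nonneg. }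
 set (d := n * (n * (K * eps * SE))).
 assert (Hmain : Rabs (e_Qc c N v Q t x1 x2 - E) <= n * (INR 4 * (d * (d + 2*SE)) + 2 * (n * (n * (1/3 * eps * (INR 4 * (SE*SE))))))).
 { rewrite eQc_eq by lra. unfold E. rewrite <- sumN_minus. apply sumN_abs. intros i Hi.
   rewrite e_c_G.
   match goal with |- Rabs (?A + 2 * ?B - ?C) <= _ => replace (A + 2*B - C) with ((A - C) + 2 * B) by ring end.
   eapply Rle_trans; [apply Rabs_triang|]. apply Rplus_le_compat.
   - rewrite <- sumN_minus. apply sumN_abs. intros m Hm. apply sq_diff; [|apply HG; auto].
     unfold d. apply (Gw_bound c N v Q i t x1 x2 m eps SE κ0); auto; try lra.
     + intros j k Hj Hk. destruct (Hsm i j k Hi Hj Hk) as [A B].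
       assert (A1 := Rabs_pos (ts2 t x1 x2 * Q i j k t x1 x2 * v i t x1 x2)).
       assert (A2 := Rabs_pos (ts2 t x1 x2 * Q i j k t x1 x2 * v j t x1 x2)).
       assert (A3 := Rabs_pos (ts2 t x1 x2 * Q i j k t x1 x2 * v k t x1 x2)).
       split; [lra|split; [lra|]]. intros alpha Ha. specialize (B alpha Ha).
       assert (B1 := Rabs_pos (ts2 t x1 x2 * v k t x1 x2 * pd alpha (Q i j k) t x1 x2)). lra.
   - rewrite Rabs_mult, (Rabs_pos_eq 2) by lra. apply Rmult_le_compat_l; [lra|].
     apply sumN_abs. intros j Hj. apply sumN_abs. intros k Hk.
     destruct (Hsm i j k Hi Hj Hk) as [A _].
     assert (A2 := Rabs_pos (ts2 t x1 x2 * Q i j k t x1 x2 * v j t x1 x2)).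
     assert (A3 := Rabs_pos (ts2 t x1 x2 * Q i j k t x1 x2 * v k t x1 x2)).
     assert (A1 : Rabs (-(1/3) * (ts2 t x1 x2 * Q i j k t x1 x2 * v i t x1 x2)) <= 1/3 * eps).
     { rewrite Rabs_mult. rewrite Rabs_Ropp, Rabs_pos_eq by lra. apply Rmult_le_compat_l; lra. }
     unfold P. replace (- (1/3) * Q i j k t x1 x2 * ts2 t x1 x2 * v i t x1 x2) with
       (-(1/3) * (ts2 t x1 x2 * Q i j k t x1 x2 * v i t x1 x2)) by ring.
     apply abs2; auto. apply sumN_abs. intros m Hm. apply abs2; apply HG; auto. }
 assert (Hfin : n * (INR 4 * (d * (d + 2*SE)) + 2 * (n * (n * (1/3 * eps * (INR 4 * (SE*SE)))))) <= 3/4 * E).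
 { rewrite <- HSE. replace (INR 4) with 4 by (simpl; ring).
   assert (Hd : d = SE / (100 * n)) by (unfold d, eps; field; lra).
   rewrite Hd. unfold eps.
   replace (n * (4 * (SE / (100 * n) * (SE / (100 * n) + 2 * SE)) + 2 * (n * (n * (1 / 3 * (1 / (100 * n ^ 3 * K)) * (4 * (SE * SE)))))))
     with (SE * SE * (8/100 + 4/(10000 * n) + 8/(300*K))) by (field; lra).
   rewrite (Rmult_comm (3/4)). apply Rmult_le_compat_l; [nra|].
   assert (4/(10000*n) <= 4/10000). { unfold Rdiv. apply Rmult_le_compat_l; [lra|]. apply Rinv_le_contravar; lra. }
   assert (8/(300*K) <= 8/300). { unfold Rdiv. apply Rmult_le_compat_l; [lra|]. apply Rinv_le_contravar; lra. }
   lra. }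
 assert (Hab := abs_le _ _ (Rle_trans _ _ _ Hmain Hfin)).
 fold E. split; lra.
Qed.
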